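(* Let $\mathbb{F}$ be an algebraically closed field with $\mathrm{char}\,\mathbb{F}=2$ and $n\ge4$. Let $\underline{a}=(e_1,e_2,\mathbf{u}_1,\mathbf{v}_1,0,\ldots,0)\in\mathbb{M}^n$ and let $\underline{b}\in\mathbb{M}^n$ be such that $f(\underline{a})=f(\underline{b})$ for all $f\in S_n^{(3)}$. Then ${\rm G}_2\underline{a}={\rm G}_2\underline{b}$.
   Context: The split octonion algebra $\mathbf{O}$ is the 8-dimensional $\mathbb{F}$-vector space of formal matrices $a=\begin{pmatrix}\alpha&\mathbf{u}\\ \mathbf{v}&\beta\end{pmatrix}$ with $\alpha,\beta\in\mathbb{F}$, $\mathbf{u},\mathbf{v}\in\mathbb{F}^3$, with multiplication $\begin{pmatrix}\alpha&\mathbf{u}\\ \mathbf{v}&\beta\end{pmatrix}\begin{pmatrix}\alpha'&\mathbf{u}'\\ \mathbf{v}'&\beta'\end{pmatrix}=\begin{pmatrix}\alpha\alpha'+\mathbf{u}\cdot\mathbf{v}'&\alpha\mathbf{u}'+\beta'\mathbf{u}-\mathbf{v}\times\mathbf{v}'\\ \alpha'\mathbf{v}+\beta\mathbf{v}'+\mathbf{u}\times\mathbf{u}'&\beta\beta'+\mathbf{v}\cdot\mathbf{u}'\end{pmatrix}$ (dot product and cross product on $\mathbb{F}^3$). Trace $\mathrm{tr}(a)=\alpha+\beta$, norm $n(a)=\alpha\beta-\mathbf{u}\cdot\mathbf{v}$. With $\mathbf{c}_1$ the first standard basis vector of $\mathbb{F}^3$: $e_1$ has $\alpha=1$ and all else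 $0$, $e_2$ has $\beta=1$ and all else $0$, $\mathbf{u}_1$ has $\mathbf{u}=\mathbf{c}_1$ and all else $0$, $\mathbf{v}_1$ has $\mathbf{v}=\mathbf{c}_1$ and all else $0$. $\mathbb{M}=\left\{\begin{pmatrix}\alpha&(\gamma,0,0)\\(\delta,0,0)&\beta\end{pmatrix}\right\}\subseteq\mathbf{O}$ is the quaternion subalgebra. ${\rm G}_2=\mathrm{Aut}(\mathbf{O})$ acts diagonally on $\mathbf{O}^n$. $S_n^{(3)}$ is the set of functions on $\mathbf{O}^n$: $\underline{a}\mapsto n(a_i)$, $\underline{a}\mapsto\mathrm{tr}(a_i)$ ($1\le i\le n$), $\underline{a}\mapsto\mathrm{tr}(a_ia_j)$ ($1\le i<j\le n$), and $\underline{a}\mapsto\mathrm{tr}((a_ia_j)a_k)$ ($1\le i<j<k\le n$). *)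

(* Defs.v *)
From mathcomp Require Import all_boot all_order all_algebra.
Set Implicit Arguments. Unset Strict Implicit. Unset Printing Implicit Defensive.
Import GRing.Theory.
Local Open Scope ring_scope.

Record vec3 (F : Type) := V3 { x1 : F; x2 : F; x3 : F }.

Section Octonions.
Variable F : fieldType.

Definition vadd (u v : vec3 F) := V3 (x1 u + x1 v) (x2 u + x2 v) (x3 u + x3 v).
Definition vscale (c : F) (u : vec3 F) := V3 (c * x1 u) (c * x2 u) (c * x3 u).
Definition vneg (u : vec3 F) := V3 (- x1 u) (- x2 u) (- x3 u).
Definition vzero : vec3 F := V3 0 0 0.
Definition dot (u v : vec3 F) : F := x1 u * x1 v + x2 u * x2 v + x3 u * x3 v.
Definition cross (u v : vec3 F) : vec3 F :=
  V3 (x2 u * x3 v - x3 u * x2 v) (x3 u * x1 v - x1 u * x3 v) (x1 u * x2 v - x2 u * x1 v).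

(* Split octonion [alpha u ; v beta] *)
Record oct := Oct { oal : F; ou : vec3 F; ov : vec3 F; obe : F }.

Definition oadd (a b : oct) :=
  Oct (oal a + oal b) (vadd (ou a) (ou b)) (vadd (ov a) (ov b)) (obe a + obe b).
Definition oscale (c : F) (a : oct) :=
  Oct (c * oal a) (vscale c (ou a)) (vscale c (ov a)) (c * obe a).
Definition ozero : oct := Oct 0 vzero vzero 0.

Definition omul (a b : oct) : oct :=
  Oct (oal a * oal b + dot (ou a) (ov b))
      (vadd (vadd (vscale (oal a) (ou b)) (vscale (obe b) (ou a))) (vneg (cross (ov a) (ov b))))
      (vadd (vadd (vscale (oal b) (ov a)) (vscale (obe a) (ov b))) (cross (ou a) (ou b)))
      (obe a * obe b + dot (ov a) (ou b)).

Definition otr (a : oct) : F := oal a + obe a.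
Definition onorm (a : oct) : F := oal a * obe a - dot (ou a) (ov a).

Definition c1 : vec3 F := V3 1 0 0.
Definition e1 : oct := Oct 1 vzero vzero 0.
Definition e2 : oct := Oct 0 vzero vzero 1.
Definition uu1 : oct := Oct 0 c1 vzero 0.
Definition vv1 : oct := Oct 0 vzero c1 0.

(* the quaternion subalgebra M *)
Definition inM (a : oct) : Prop :=
  x2 (ou a) = 0 /\ x3 (ou a) = 0 /\ x2 (ov a) = 0 /\ x3 (ov a) = 0.

Definition is_G2 (g : oct -> oct) : Prop :=
  [/\ forall c x y, g (oadd (oscale c x) y) = oadd (oscale c (g x)) (g y),
      bijective g &
      forall x y, g (omul x y) = omul (g x) (g y)].

Definition G2orbit (n : nat) (a : 'I_n -> oct) : ('I_n -> oct) -> Prop :=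
  fun c => exists g, is_G2 g /\ forall i, c i = g (a i).

Definition S3_agree (n : nat) (a b : 'I_n -> oct) : Prop :=
  [/\ forall i, onorm (a i) = onorm (b i),
      forall i, otr (a i) = otr (b i),
      forall i j : 'I_n, (i < j)%N -> otr (omul (a i) (a j)) = otr (omul (b i) (b j)) &
      forall i j k : 'I_n, (i < j)%N -> (j < k)%N ->
        otr (omul (omul (a i) (a j)) (a k)) = otr (omul (omul (b i) (b j)) (b k))].

Definition a_std (n : nat) : 'I_n -> oct := fun i =>
  match nat_of_ord i with
  | 0 => e1 | 1 => e2 | 2 => uu1 | 3 => vv1 | _ => ozero end.

End Octonions.

(* Main.v *)
Require Import Defs.
From mathcomp Require Import all_boot all_order all_algebra.
From mathcomp Require Import ring.
Set Implicit Arguments. Unset Strict Implicit. Unset Printing Implicit Defensive.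
Import GRing.Theory.
Local Open Scope ring_scope.

Section G.
Variable F : fieldType.
Variables p q r s : F.

Definition ph11 (m11 m12 m21 m22 : F) := (p* m11 + q* m21) * s - (p* m12 + q* m22) * r.
Definition ph12 (m11 m12 m21 m22 : F) := - ((p* m11 + q* m21) * q) + (p* m12 + q* m22) * p.
Definition ph21 (m11 m12 m21 m22 : F) := (r* m11 + s* m21) * s - (r* m12 + s* m22) * r.
Definition ph22 (m11 m12 m21 m22 : F) := - ((r* m11 + s* m21) * q) + (r* m12 + s* m22) * p.

Definition gP (x : oct F) : oct F :=
  let a := oal x in let g := x1 (ou x) in let d := x1 (ov x) in let be := obe x in
  let y2 := x2 (ou x) in let y3 := x3 (ou x) in let z2 := x2 (ov x) in let z3 := x3 (ov x) in
  Oct (ph11 a g d be)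
      (V3 (ph12 a g d be) (ph11 y2 z3 (-y3) z2) (- ph21 y2 z3 (-y3) z2))
      (V3 (ph21 a g d be) (ph22 y2 z3 (-y3) z2) (ph12 y2 z3 (-y3) z2))
      (ph22 a g d be).

Lemma gP_lin c x y : gP (oadd (oscale c x) y) = oadd (oscale c (gP x)) (gP y).
Proof.
case: x => a [g y2 y3] [d z2 z3] be; case: y => a' [g' y2' y3'] [d' z2' z3'] be'.
rewrite /gP /oadd /oscale /vadd /vscale /ph11 /ph12 /ph21 /ph22 /=.
by congr Oct; [ring | congr V3; ring | congr V3; ring | ring].
Qed.

Lemma mul1_via (D A B : F) : D = 1 -> A * D = B -> A = B.
Proof. by move=> -> ; rewrite mulr1. Qed.

Lemma gP_mul (hD : p*s - q*r = 1) x y : gP (omul x y) = omul (gP x) (gP y).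
Proof.
case: x => a [g y2 y3] [d z2 z3] be; case: y => a' [g' y2' y3'] [d' z2' z3'] be'.
rewrite /gP /omul /vadd /vscale /vneg /dot /cross /ph11 /ph12 /ph21 /ph22 /=.
congr Oct; [|congr V3|congr V3|]; apply: (mul1_via hD); ring.
Qed.

End G.

Lemma sq_via (F : fieldType) (D A B : F) : D = 1 -> B * D^+2 = A -> A = B.
Proof. by move=> -> <-; rewrite expr1n mulr1. Qed.

Lemma gP_inv (F : fieldType) (p q r s : F) (hD : p*s - q*r = 1) x :
  gP s (-q) (-r) p (gP p q r s x) = x.
Proof.
case: x => a [g y2 y3] [d z2 z3] be.
rewrite /gP /ph11 /ph12 /ph21 /ph22 /=.
congr Oct; [|congr V3|congr V3|]; apply: (sq_via hD); ring.
Qed.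

Lemma gP_G2 (F : fieldType) (p q r s : F) (hD : p*s - q*r = 1) :
  is_G2 (gP p q r s) /\ cancel (gP p q r s) (gP s (-q) (-r) p) /\
  cancel (gP s (-q) (-r) p) (gP p q r s).
Proof.
have c1 : cancel (gP p q r s) (gP s (-q) (-r) p) by exact: gP_inv.
have c2 : cancel (gP s (-q) (-r) p) (gP p q r s).
  have hD' : s * p - (-q) * (-r) = 1 by rewrite mulrNN [s * p]mulrC.
  by move=> x; have := (@gP_inv F s (-q) (-r) p hD' x); rewrite !opprK.
split=> //; split; [exact: gP_lin| exists (gP s (-q) (-r) p) => // | exact: gP_mul].
Qed.

Lemma gP_inv_G2 (F : fieldType) (p q r s : F) (hD : p*s - q*r = 1) :
  is_G2 (gP s (-q) (-r) p).
Proof.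
have hD' : s * p - (-q) * (-r) = 1 by rewrite mulrNN [s * p]mulrC.
by have := (@gP_G2 F s (-q) (-r) p hD'); case.
Qed.

Lemma G2_comp (F : fieldType) (h k : oct F -> oct F) :
  is_G2 h -> is_G2 k -> is_G2 (h \o k).
Proof.
case=> hl hb hm [kl kb km]; split.
- by move=> c x y /=; rewrite kl hl.
- exact: bij_comp.
- by move=> x y /=; rewrite km hm.
Qed.

Lemma orbit_transfer (F : fieldType) n (a b : 'I_n -> oct F) g g' :
  is_G2 g -> is_G2 g' -> cancel g g' -> (forall i, b i = g (a i)) ->
  forall c, G2orbit a c <-> G2orbit b c.
Proof.
move=> Gg Gg' c' hb c; split.
- case=> h [Gh hc]; exists (h \o g'); split; first exact: G2_comp.
  by move=> i; rewrite hc /= hb c'.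
- case=> h [Gh hc]; exists (h \o g); split; first exact: G2_comp.
  by move=> i; rewrite hc /= hb.
Qed.

Definition mk (F : fieldType) (a c d e : F) : oct F := Oct a (V3 c 0 0) (V3 d 0 0) e.
Definition tr2 (F : fieldType) (a c d e a' c' d' e' : F) := a*a' + c*d' + e*e' + d*c'.

Lemma cert (F : fieldType) (two0 : 2%:R = 0 :> F) (k1 k2 k3 m : F)
  {L1 R1 L2 R2 L3 R3 x y : F} : L1 = R1 -> L2 = R2 -> L3 = R3 ->
  x - y = k1 * (L1 - R1) + k2 * (L2 - R2) + k3 * (L3 - R3) + 2%:R * m -> x = y.
Proof.
move=> -> -> -> ; rewrite !subrr two0 !mulr0 mul0r !addr0 => /eqP.
by rewrite subr_eq0 => /eqP.
Qed.
Arguments cert {F} two0 k1 k2 k3 m {L1 R1 L2 R2 L3 R3 x y}.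

Lemma sq_via' (F : fieldType) (D A B : F) : D = 1 -> A * D^+2 = B -> A = B.
Proof. by move=> -> <-; rewrite expr1n mulr1. Qed.

Lemma decomp (F : fieldType) (p q r s : F) (hD : p*s - q*r = 1) al ga de be u11 u12 u21 u22 :
 tr2 al ga de be (p*s) (-(p*q)) (r*s) (-(q*r)) = u11 ->
 tr2 al ga de be (-(p*r)) (p^+2) (-(r^+2)) (p*r) = u12 ->
 tr2 al ga de be (q*s) (-(q^+2)) (s^+2) (-(q*s)) = u21 ->
 tr2 al ga de be (-(q*r)) (p*q) (-(r*s)) (p*s) = u22 ->
 mk al ga de be =
 mk (u11*(p*s) + u21*(-(p*r)) + u12*(q*s) + u22*(-(q*r)))
    (u11*(-(p*q)) + u21*(p^+2) + u12*(-(q^+2)) + u22*(p*q))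
    (u11*(r*s) + u21*(-(r^+2)) + u12*(s^+2) + u22*(-(r*s)))
    (u11*(-(q*r)) + u21*(p*r) + u12*(-(q*s)) + u22*(p*s)).
Proof.
move=> <- <- <- <-; rewrite /mk /tr2.
by congr Oct; [|congr V3|congr V3|]; apply: (sq_via' hD); ring.
Qed.

Lemma sqrtF (F : closedFieldType) (a : F) : exists x : F, x ^+ 2 = a.
Proof.
have [x Dx] := @solve_monicpoly F 2 (nth 0 [:: a]) isT.
by exists x; rewrite Dx !big_ord_recl big_ord0 /= mulr1 mul0r !addr0.
Qed.


Lemma core (F : closedFieldType) (two0 : 2%:R = 0 :> F)
  (al0 ga0 de0 be0 al1 ga1 de1 be1 al2 ga2 de2 be2 al3 ga3 de3 be3 : F) :
  otr (e1 F) = otr (mk al0 ga0 de0 be0) ->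
  otr (e2 F) = otr (mk al1 ga1 de1 be1) ->
  otr (uu1 F) = otr (mk al2 ga2 de2 be2) ->
  otr (vv1 F) = otr (mk al3 ga3 de3 be3) ->
  onorm (uu1 F) = onorm (mk al2 ga2 de2 be2) ->
  onorm (vv1 F) = onorm (mk al3 ga3 de3 be3) ->
  otr (omul (e1 F) (uu1 F)) = otr (omul (mk al0 ga0 de0 be0) (mk al2 ga2 de2 be2)) ->
  otr (omul (e1 F) (vv1 F)) = otr (omul (mk al0 ga0 de0 be0) (mk al3 ga3 de3 be3)) ->
  otr (omul (e2 F) (uu1 F)) = otr (omul (mk al1 ga1 de1 be1) (mk al2 ga2 de2 be2)) ->
  otr (omul (e2 F) (vv1 F)) = otr (omul (mk al1 ga1 de1 be1) (mk al3 ga3 de3 be3)) ->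
  otr (omul (uu1 F) (vv1 F)) = otr (omul (mk al2 ga2 de2 be2) (mk al3 ga3 de3 be3)) ->
  otr (omul (omul (e1 F) (uu1 F)) (vv1 F)) =
    otr (omul (omul (mk al0 ga0 de0 be0) (mk al2 ga2 de2 be2)) (mk al3 ga3 de3 be3)) ->
  otr (omul (omul (e2 F) (uu1 F)) (vv1 F)) =
    otr (omul (omul (mk al1 ga1 de1 be1) (mk al2 ga2 de2 be2)) (mk al3 ga3 de3 be3)) ->
  exists p q r s : F, p * s - q * r = 1 /\
   [/\ mk al0 ga0 de0 be0 = gP p q r s (e1 F), mk al1 ga1 de1 be1 = gP p q r s (e2 F),
       mk al2 ga2 de2 be2 = gP p q r s (uu1 F) & mk al3 ga3 de3 be3 = gP p q r s (vv1 F)].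
Proof.
cbv [mk otr onorm omul dot cross vadd vscale vneg e1 e2 uu1 vv1 c1 vzero oal obe ou ov x1 x2 x3].
move=> t0 t1 t2 t3 n2 n3 p02 p03 p12 p13 p23 q023 q123.
have [p hp] := sqrtF ga2. have [r hr] := sqrtF (- de2).
have [q hq] := sqrtF (- ga3). have [s hs] := sqrtF de3.
have {}hr : de2 = - r^+2 by rewrite hr opprK.
have {}hq : ga3 = - q^+2 by rewrite hq opprK.
subst ga2 de2 ga3 de3.
have hb2 : be2 = - al2 by apply: (cert two0 (-1) 0 0 0 t2 (erefl (0:F)) (erefl (0:F))); ring.
have hb3 : be3 = - al3 by apply: (cert two0 (-1) 0 0 0 t3 (erefl (0:F)) (erefl (0:F))); ring.
subst be2 be3.
have ha2 : (al2 + p * r) ^+ 2 = 0.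
  by apply: (cert two0 1 0 0 (p * r * (al2 + p * r)) n2 (erefl (0:F)) (erefl (0:F))); ring.
move/eqP: ha2; rewrite sqrf_eq0 addr_eq0 => /eqP ha2; subst al2.
have ha3 : (al3 - q * s) ^+ 2 = 0.
  by apply: (cert two0 1 0 0 (q * s * (q * s - al3)) n3 (erefl (0:F)) (erefl (0:F))); ring.
move/eqP: ha3; rewrite sqrf_eq0 subr_eq0 => /eqP ha3; subst al3.
have hD : (p * s - q * r - 1) ^+ 2 = 0.
  by apply: (cert two0 (-1) 0 0 (1 - (p * s - q * r)) p23 (erefl (0:F)) (erefl (0:F))); ring.
move/eqP: hD; rewrite sqrf_eq0 subr_eq0 => /eqP hD.
exists p, q, r, s; split => //.
have E : forall a c d e : F, Oct a (V3 c 0 0) (V3 d 0 0) e = mk a c d e by [].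
rewrite !E.
split.
- have h11 : tr2 al0 ga0 de0 be0 (p*s) (-(p*q)) (r*s) (-(q*r)) = 1.
    apply: (cert two0 (-1) (- tr2 al0 ga0 de0 be0 (p*s) (-(p*q)) (r*s) (-(q*r))) 0 0 q023 hD (erefl (0:F))).
    rewrite /tr2; ring.
  have h12 : tr2 al0 ga0 de0 be0 (-(p*r)) (p^+2) (-(r^+2)) (p*r) = 0.
    apply: (cert two0 (-1) 0 0 0 p02 (erefl (0:F)) (erefl (0:F))); rewrite /tr2; ring.
  have h21 : tr2 al0 ga0 de0 be0 (q*s) (-(q^+2)) (s^+2) (-(q*s)) = 0.
    apply: (cert two0 (-1) 0 0 0 p03 (erefl (0:F)) (erefl (0:F))); rewrite /tr2; ring.
  have h22 : tr2 al0 ga0 de0 be0 (-(q*r)) (p*q) (-(r*s)) (p*s) = 0.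
    apply: (cert two0 (al0 + be0) (-1) (-1) 0 hD t0 h11); rewrite /tr2; ring.
  rewrite (decomp hD h11 h12 h21 h22).
  cbv [mk gP ph11 ph12 ph21 ph22 oal obe ou ov x1 x2 x3].
  by congr Oct; [|congr V3|congr V3|]; ring.
- have h11 : tr2 al1 ga1 de1 be1 (p*s) (-(p*q)) (r*s) (-(q*r)) = 0.
    apply: (cert two0 (-1) (- tr2 al1 ga1 de1 be1 (p*s) (-(p*q)) (r*s) (-(q*r))) 0 0 q123 hD (erefl (0:F))).
    rewrite /tr2; ring.
  have h12 : tr2 al1 ga1 de1 be1 (-(p*r)) (p^+2) (-(r^+2)) (p*r) = 0.
    apply: (cert two0 (-1) 0 0 0 p12 (erefl (0:F)) (erefl (0:F))); rewrite /tr2; ring.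
  have h21 : tr2 al1 ga1 de1 be1 (q*s) (-(q^+2)) (s^+2) (-(q*s)) = 0.
    apply: (cert two0 (-1) 0 0 0 p13 (erefl (0:F)) (erefl (0:F))); rewrite /tr2; ring.
  have h22 : tr2 al1 ga1 de1 be1 (-(q*r)) (p*q) (-(r*s)) (p*s) = 1.
    apply: (cert two0 (al1 + be1) (-1) (-1) 0 hD t1 h11); rewrite /tr2; ring.
  rewrite (decomp hD h11 h12 h21 h22).
  cbv [mk gP ph11 ph12 ph21 ph22 oal obe ou ov x1 x2 x3].
  by congr Oct; [|congr V3|congr V3|]; ring.
- cbv [mk gP ph11 ph12 ph21 ph22 oal obe ou ov x1 x2 x3].
  by congr Oct; [|congr V3|congr V3|]; ring.
- cbv [mk gP ph11 ph12 ph21 ph22 oal obe ou ov x1 x2 x3].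
  by congr Oct; [|congr V3|congr V3|]; ring.
Qed.

Lemma zero_part (F : fieldType) (two0 : 2%:R = 0 :> F) (p q r s : F) (hD : p * s - q * r = 1)
  (a c d e : F) :
  otr (omul (e1 F) (ozero F)) = otr (omul (gP p q r s (e1 F)) (mk a c d e)) ->
  otr (omul (e2 F) (ozero F)) = otr (omul (gP p q r s (e2 F)) (mk a c d e)) ->
  otr (omul (uu1 F) (ozero F)) = otr (omul (gP p q r s (uu1 F)) (mk a c d e)) ->
  otr (omul (vv1 F) (ozero F)) = otr (omul (gP p q r s (vv1 F)) (mk a c d e)) ->
  mk a c d e = gP p q r s (ozero F).
Proof.
cbv [mk gP ph11 ph12 ph21 ph22 otr omul dot cross vadd vscale vneg e1 e2 uu1 vv1 c1 vzero ozero oal obe ou ov x1 x2 x3].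
move=> k1 k2 k3 k4.
have h11 : tr2 a c d e (p*s) (-(p*q)) (r*s) (-(q*r)) = 0.
  apply: (cert two0 (-1) 0 0 0 k1 (erefl (0:F)) (erefl (0:F))); rewrite /tr2; ring.
have h22 : tr2 a c d e (-(q*r)) (p*q) (-(r*s)) (p*s) = 0.
  apply: (cert two0 (-1) 0 0 0 k2 (erefl (0:F)) (erefl (0:F))); rewrite /tr2; ring.
have h12 : tr2 a c d e (-(p*r)) (p^+2) (-(r^+2)) (p*r) = 0.
  apply: (cert two0 (-1) 0 0 0 k3 (erefl (0:F)) (erefl (0:F))); rewrite /tr2; ring.
have h21 : tr2 a c d e (q*s) (-(q^+2)) (s^+2) (-(q*s)) = 0.
  apply: (cert two0 (-1) 0 0 0 k4 (erefl (0:F)) (erefl (0:F))); rewrite /tr2; ring.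
have E : forall a c d e : F, Oct a (V3 c 0 0) (V3 d 0 0) e = mk a c d e by [].
rewrite E (decomp hD h11 h12 h21 h22).
cbv [mk].
by congr Oct; [|congr V3|congr V3|]; ring.
Qed.

Theorem lemma7p8 (F : closedFieldType) (hchar : 2%N \in [pchar F]) (n : nat)
  (hn : (4 <= n)%N) (b : 'I_n -> oct F) (hbM : forall i, inM (b i))
  (hS : S3_agree (@a_std F n) b) :
  forall c, G2orbit (@a_std F n) c <-> G2orbit b c.
Proof.
have two0 : 2%:R = 0 :> F := pcharf0 hchar.
have h3 : (3 < n)%N := hn.
have h2 : (2 < n)%N := ltn_trans (ltnSn 2) h3.
have h1 : (1 < n)%N := ltn_trans (ltnSn 1) h2.
have h0 : (0 < n)%N := ltn_trans (ltnSn 0) h1.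
pose i0 := Ordinal h0; pose i1 := Ordinal h1; pose i2 := Ordinal h2; pose i3 := Ordinal h3.
have decM : forall i, exists al ga de be, b i = mk al ga de be.
  move=> i; have := hbM i; case: (b i) => al [ga y2 y3] [de z2 z3] be.
  by move=> [/= -> [/= -> [/= -> /= ->]]]; exists al, ga, de, be.
have [al0 [ga0 [de0 [be0 E0]]]] := decM i0.
have [al1 [ga1 [de1 [be1 E1]]]] := decM i1.
have [al2 [ga2 [de2 [be2 E2]]]] := decM i2.
have [al3 [ga3 [de3 [be3 E3]]]] := decM i3.
case: hS => hN hT hP hQ.
have t0 := hT i0; rewrite E0 in t0.
have t1 := hT i1; rewrite E1 in t1.
have t2 := hT i2; rewrite E2 in t2.
have t3 := hT i3; rewrite E3 in t3.
have n2 := hN i2; rewrite E2 in n2.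
have n3 := hN i3; rewrite E3 in n3.
have p02 := hP i0 i2 isT; rewrite E0 E2 in p02.
have p03 := hP i0 i3 isT; rewrite E0 E3 in p03.
have p12 := hP i1 i2 isT; rewrite E1 E2 in p12.
have p13 := hP i1 i3 isT; rewrite E1 E3 in p13.
have p23 := hP i2 i3 isT; rewrite E2 E3 in p23.
have q023 := hQ i0 i2 i3 isT isT; rewrite E0 E2 E3 in q023.
have q123 := hQ i1 i2 i3 isT isT; rewrite E1 E2 E3 in q123.
have [p [q [r [s [hD [B0 B1 B2 B3]]]]]] :=
  core two0 t0 t1 t2 t3 n2 n3 p02 p03 p12 p13 p23 q023 q123.
have hb : forall i, b i = gP p q r s (@a_std F n i).
  case=> [[|[|[|[|m]]]] hm].
  - have -> : Ordinal hm = i0 by apply: val_inj.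
    by rewrite E0 B0.
  - have -> : Ordinal hm = i1 by apply: val_inj.
    by rewrite E1 B1.
  - have -> : Ordinal hm = i2 by apply: val_inj.
    by rewrite E2 B2.
  - have -> : Ordinal hm = i3 by apply: val_inj.
    by rewrite E3 B3.
  have [a [c [d [e Ei]]]] := decM (Ordinal hm).
  have k0 := hP i0 (Ordinal hm) isT; rewrite E0 B0 Ei in k0.
  have k1 := hP i1 (Ordinal hm) isT; rewrite E1 B1 Ei in k1.
  have k2 := hP i2 (Ordinal hm) isT; rewrite E2 B2 Ei in k2.
  have k3 := hP i3 (Ordinal hm) isT; rewrite E3 B3 Ei in k3.
  rewrite Ei; exact: (zero_part two0 hD k0 k1 k2 k3).
have [G [c1 c2]] := gP_G2 hD.
exact: (orbit_transfer G (gP_inv_G2 hD) c1 hb).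
Qed.
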